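(* Let $T$ be a primed tableau of shape $\lambda/\mu$ over $X'_k$, $1\le i\le k-1$, $j=i+1$, with $f_i(T)\ne 0$, and let $x,q$ be the boxes chosen in the definition of $f_i$. Then either $q=x$ and $f_i(T)$ is obtained from $T$ by replacing the entry $i$ in $x$ by $j$, or $q\ne x$ and $f_i(T)$ is obtained by replacing the $i$ in $x$ by $j'$ and a $j'$ in $q$ by $j$. Moreover, $f_i(T)$ is again a primed tableau of shape $\lambda/\mu$.
   Context: Primed tableaux: Fix $k$. $X'_k=\{1'<1<2'<2<\dots<k'<k\}$; moving one step up in this chain is ''increasing by a half unit'' (e.g. $i'\to i$, $i\to (i+1)'$). A primed tableau of (skew) shape $\lambda/\mu$ is a filling of the diagram (English convention; ''below'' = next row down) with letters of $X'_k$, rows and columns weakly increasing, at most one $i'$ per row and at most one $i$ per column, for every $i$. For a position $p$, $c(p)$ is its entry, with $c(p)=\infty$ if $p$ is not a box of $T$. The reading word of $T$ is the word of its unprimed entries, read row by row left to right, from the bottom row to the top row. Bracketing: fix $i$, $j=i+1$. In the subword of the reading word consisting of the letters $i$ and $j$, repeatedly pair (bracket) a letter $j$ with a letter $i$ occurring later such that no unbracketed letters lie between them, until the unbracketed letters form a word $i^aj^b$. Operator $f_i$: if there is no unbracketed $i$, $f_i(T)=0$. Otherwise let $x$ be the box of $T$ corresponding to the rightmost unbracketed $i$; $E_x$ the position immediately right of $x$, $S_x$ the position immediately below $x$. Choose a box $q$: (F1) if $c(E_x)\ge j$ and $c(S_x)>j$, $q=x$; (F2) if $c(E_x)=j'$,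 $q=E_x$; (F3) if $c(E_x)\ge j$ and $c(S_x)\in\{j',j\}$, take the maximal ribbon (connected skew strip) starting at $S_x$ and extending by steps South and/or West consisting only of boxes with entries $j$ or $j'$, and let $q$ be its Southwest-most box. Then $f_i(T)$ is obtained from $T$ by increasing $c(x)$ by a half unit and then increasing $c(q)$ by a half unit (so if $q=x$ the entry of $x$ increases by a full unit). *)

(* Defs.v *)
From mathcomp Require Import all_boot.
Set Implicit Arguments.
Unset Strict Implicit.
Unset Printing Implicit Defensive.

(* Letters of X'_k are encoded as naturals:  i' |-> 2i-1,  i |-> 2i
   (so 1' < 1 < 2' < 2 < ... < k' < k  is  1 < 2 < ... < 2k, and
   "increasing by a half unit" is adding 1).  Odd = primed, even = unprimed. *)
Definition pletter (i : nat) : nat := i.*2.-1.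
Definition uletter (i : nat) : nat := i.*2.

(* Positions (row, column), 0-indexed, English convention: row r+1 is below
   row r, column c+1 is to the right of column c. *)
Definition pos := (nat * nat)%type.

Definition skew_shape (la mu : seq nat) : Prop :=
  sorted geq la /\ sorted geq mu /\ (forall r, nth 0 mu r <= nth 0 la r).

Definition in_shape (la mu : seq nat) (p : pos) : bool :=
  (nth 0 mu p.1 <= p.2) && (p.2 < nth 0 la p.1).

(* A filling is a function pos -> nat; only its values on boxes matter. *)
Definition primed_tableau (k : nat) (la mu : seq nat) (T : pos -> nat) : Prop :=
  [/\ (forall p, in_shape la mu p -> 1 <= T p <= (uletter k)),
      (forall r c1 c2, c1 <= c2 -> in_shape la mu (r, c1) -> in_shape la mu (r, c2) ->
         T (r, c1) <= T (r, c2)),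
      (forall r1 r2 c, r1 <= r2 -> in_shape la mu (r1, c) -> in_shape la mu (r2, c) ->
         T (r1, c) <= T (r2, c)),
      (forall r c1 c2, in_shape la mu (r, c1) -> in_shape la mu (r, c2) ->
         odd (T (r, c1)) -> T (r, c1) = T (r, c2) -> c1 = c2)
    &
      (forall r1 r2 c, in_shape la mu (r1, c) -> in_shape la mu (r2, c) ->
         ~~ odd (T (r1, c)) -> T (r1, c) = T (r2, c) -> r1 = r2)].

(* c(p): the entry of p, or None (= infinity) if p is not a box. *)
Definition cval (la mu : seq nat) (T : pos -> nat) (p : pos) : option nat :=
  if in_shape la mu p then Some (T p) else None.
Definition cge (o : option nat) (n : nat) : bool :=
  if o is Some v then n <= v else true.
Definition cgt (o : option nat) (n : nat) : bool :=
  if o is Some v then n < v else true.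

Definition row_boxes (la mu : seq nat) (r : nat) : seq pos :=
  [seq (r, c) | c <- iota (nth 0 mu r) (nth 0 la r - nth 0 mu r)].

(* Boxes of the reading word: unprimed entries, rows from bottom to top,
   each row left to right. *)
Definition reading_boxes (la mu : seq nat) (T : pos -> nat) : seq pos :=
  [seq p <- flatten [seq row_boxes la mu r | r <- rev (iota 0 (size la))]
     | ~~ odd (T p)].

(* Bracketing (j = i+1 plays "(" and i plays ")"): scanning the reading word
   left to right, a j is pushed, an i is bracketed with the nearest
   unbracketed j to its left if any, otherwise it is unbracketed.  The state
   records the number of pending unbracketed j's and the last unbracketed i. *)
Definition bracket_step (i : nat) (T : pos -> nat) (st : nat * option pos) (p : pos) :=
  let: (o, cand) := st in
  if T p == uletter i.+1 then (o.+1, cand)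
  else if T p == uletter i then
    (if o is o'.+1 then (o', cand) else (0, Some p))
  else st.

Definition rightmost_free_i (i : nat) (la mu : seq nat) (T : pos -> nat) : option pos :=
  (foldl (bracket_step i T) (0, None) (reading_boxes la mu T)).2.

Definition is_jj (j : nat) (o : option nat) : bool :=
  (o == Some (pletter j)) || (o == Some (uletter j)).

Definition ribbon_step (la mu : seq nat) (T : pos -> nat) (j : nat) (p : pos) : pos :=
  let S := (p.1.+1, p.2) in
  if is_jj j (cval la mu T S) then S
  else if (0 < p.2) && is_jj j (cval la mu T (p.1, p.2.-1)) then (p.1, p.2.-1)
  else p.

(* Southwest-most box of the maximal ribbon starting at p (iterating more
   than the maximal possible ribbon length reaches the fixpoint). *)
Definition ribbon_end (la mu : seq nat) (T : pos -> nat) (j : nat) (p : pos) : pos :=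
  iter (size la + head 0 la) (ribbon_step la mu T j) p.

(* The box q of cases (F1), (F2), (F3); None if no case applies. *)
Definition choose_q (i : nat) (la mu : seq nat) (T : pos -> nat) (x : pos) : option pos :=
  let j := i.+1 in
  let E := (x.1, x.2.+1) in
  let S := (x.1.+1, x.2) in
  if cval la mu T E == Some (pletter j) then Some E
  else if cge (cval la mu T E) (uletter j) && is_jj j (cval la mu T S)
       then Some (ribbon_end la mu T j S)
  else if cge (cval la mu T E) (uletter j) && cgt (cval la mu T S) (uletter j)
       then Some x
  else None.

(* Increase the entry at p by a half unit. *)
Definition bump (T : pos -> nat) (p : pos) : pos -> nat :=
  fun z => if z == p then (T p).+1 else T z.

(* f_i(T); None stands for 0. *)
Definition f_op (i : nat) (la mu : seq nat) (T : pos -> nat) : option (pos -> nat) :=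
  match rightmost_free_i i la mu T with
  | None => None
  | Some x =>
      match choose_q i la mu T x with
      | None => None
      | Some q => Some (bump (bump T x) q)
      end
  end.

(* Main.v *)
Require Import Defs.
From mathcomp Require Import all_boot zify.
From Stdlib Require Import FunctionalExtensionality.
Set Implicit Arguments.
Unset Strict Implicit.
Unset Printing Implicit Defensive.


Lemma uletterS i : uletter i.+1 = (uletter i).+2.
Proof. by rewrite /uletter doubleS. Qed.
Lemma pletterS i : pletter i.+1 = (uletter i).+1.
Proof. by rewrite /pletter /uletter doubleS. Qed.

Arguments bracket_step : simpl never.

Lemma bs_J i (T : pos -> nat) o c p : T p = uletter i.+1 ->
  bracket_step i T (o,c) p = (o.+1,c).
Proof. by rewrite /bracket_step => ->; rewrite eqxx. Qed.
Lemma bs_I0 i (T : pos -> nat) c p : T p = uletter i ->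
  bracket_step i T (0,c) p = (0, Some p).
Proof.
rewrite /bracket_step => ->; rewrite eqxx.
by rewrite ifF //; apply/negbTE/eqP; rewrite uletterS; lia.
Qed.
Lemma bs_IS i (T : pos -> nat) o c p : T p = uletter i ->
  bracket_step i T (o.+1,c) p = (o,c).
Proof.
rewrite /bracket_step => ->; rewrite eqxx.
by rewrite ifF //; apply/negbTE/eqP; rewrite uletterS; lia.
Qed.
Lemma bs_O i (T : pos -> nat) o c p : T p <> uletter i.+1 -> T p <> uletter i ->
  bracket_step i T (o,c) p = (o,c).
Proof. by rewrite /bracket_step => /eqP/negbTE -> /eqP/negbTE ->. Qed.

Lemma step_cnt i (T : pos -> nat) s o c :
  o + count (fun p => T p == uletter i.+1) s <=
  (foldl (bracket_step i T) (o,c) s).1 + count (fun p => T p == uletter i) s.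
Proof.
elim: s o c => [|p s IH] o c /=; first by [].
case: (T p == uletter i.+1) /eqP => HJ.
  have HI : (T p == uletter i) = false.
    by apply/negbTE/eqP; rewrite HJ uletterS; lia.
  rewrite HI bs_J //; have := IH o.+1 c; lia.
case: (T p == uletter i) /eqP => HI.
  case: o => [|o]; [rewrite bs_I0 //; have := IH 0 (Some p) | rewrite bs_IS //; have := IH o c]; lia.
rewrite bs_O //; have := IH o c; lia.
Qed.

Lemma rcons_split (A : Type) (v : seq A) p v1 p' v2 :
  rcons v p = v1 ++ p' :: v2 ->
  (v1 = v /\ p' = p /\ v2 = [::]) \/ exists v2', v = v1 ++ p' :: v2'.
Proof.
case/lastP: v2 => [|v2' y].
  by rewrite cats1 => /rcons_inj [-> ->]; left.
have -> : v1 ++ p' :: rcons v2' y = rcons (v1 ++ p' :: v2') y.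
  by rewrite rcons_cat rcons_cons.
by move/rcons_inj => [-> _]; right; exists v2'.
Qed.

Lemma fold_decomp i (T : pos -> nat) w x :
  (foldl (bracket_step i T) (0,None) w).2 = Some x ->
  exists u v, w = u ++ x :: v /\ T x = uletter i /\
    (foldl (bracket_step i T) (0,None) u).1 = 0 /\
    (forall v1 p v2, v = v1 ++ p :: v2 -> T p = uletter i ->
       0 < (foldl (bracket_step i T) (0,None) (u ++ x :: v1)).1).
Proof.
elim/last_ind: w => [|w p IH] //=.
rewrite foldl_rcons.
case E: (foldl (bracket_step i T) (0, None) w) => [o cand].
rewrite E /= in IH.
have keep : cand = Some x -> (T p = uletter i -> 0 < o) ->
   exists u v, rcons w p = u ++ x :: v /\ T x = uletter i /\
    (foldl (bracket_step i T) (0,None) u).1 = 0 /\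
    (forall v1 p0 v2, v = v1 ++ p0 :: v2 -> T p0 = uletter i ->
       0 < (foldl (bracket_step i T) (0,None) (u ++ x :: v1)).1).
  move=> Hc Hp; have [u [v [Hw [Hx [Hu Hv]]]]] := IH Hc.
  exists u, (rcons v p); split; first by rewrite Hw rcons_cat.
  do 2!split=> //.
  move=> v1 p0 v2 Hs Hp0; case: (rcons_split Hs) => [[Hv1 [Hp' _]] | [v2' Hv2']].
    subst v1 p0.
    by rewrite -Hw E; apply: Hp.
  exact: Hv Hv2' Hp0.
case: (T p == uletter i.+1) /eqP => HJ.
  rewrite bs_J // => /= Hc; apply: keep => // HI; move: HJ; rewrite HI uletterS; lia.
case: (T p == uletter i) /eqP => HI.
  case: o E keep => [|o] E keep /=.
    rewrite bs_I0 //=; case=> <-; exists w, [::]; rewrite cats1; do 3!split=> //.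
      by rewrite E.
    by case.
  by rewrite bs_IS // => Hc; apply: keep.
by rewrite bs_O // => Hc; apply: keep.
Qed.


Lemma sorted_geq_nth (s : seq nat) a b : sorted geq s -> a <= b -> nth 0 s b <= nth 0 s a.
Proof.
move=> Hs Hab.
case: (ltnP b (size s)) => Hb.
  have Ha : a < size s by lia.
  have gtr : transitive geq by move=> a1 b1 c1 /= H1 H2; lia.
  have grf : reflexive geq by move=> a1 /=.
  exact: (sorted_leq_nth gtr grf 0 Hs).
by rewrite nth_default.
Qed.

Definition rowpart (t d e : nat) : seq pos := [seq (t, c) | c <- iota d (e - d)].

Lemma row_boxesE la mu t : row_boxes la mu t = rowpart t (nth 0 mu t) (nth 0 la t).
Proof. by []. Qed.

Lemma rowpart_split t d m e : d <= m <= e -> rowpart t d e = rowpart t d m ++ rowpart t m e.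
Proof.
move=> H; rewrite /rowpart -map_cat.
have -> : e - d = (m - d) + (e - m) by lia.
by rewrite iotaD; congr (map _ (_ ++ iota _ _)); lia.
Qed.

Lemma rowpart_cons t d e : d < e -> rowpart t d e = (t, d) :: rowpart t d.+1 e.
Proof.
move=> H; rewrite /rowpart.
have -> : e - d = (e - d.+1).+1 by lia.
by [].
Qed.

Lemma rowpart_rcons t d e : d < e -> rowpart t d e = rcons (rowpart t d e.-1) (t, e.-1).
Proof.
move=> H; rewrite (@rowpart_split t d e.-1 e); last by lia.
rewrite -cats1; congr (_ ++ _).
rewrite rowpart_cons; last by lia.
by rewrite /rowpart; have -> : e - e.-1.+1 = 0 by lia.
Qed.

Lemma mem_rowpart z t d e : z \in rowpart t d e -> z.1 = t /\ d <= z.2 < e.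
Proof.
by case/mapP=> c; rewrite mem_iota => /andP [H1 H2] ->; split=> //=; lia.
Qed.

Lemma mem_rows la mu z l : z \in flatten [seq row_boxes la mu s | s <- l] ->
   z.1 \in l /\ in_shape la mu z.
Proof.
case/flattenP=> ? /mapP [s Hs ->]; rewrite row_boxesE => /mem_rowpart [H1 /andP [H2 H3]].
by rewrite H1; split=> //; rewrite /in_shape H1; apply/andP; split.
Qed.

Lemma rev_iota_split m n t : m <= t < m + n ->
  rev (iota m n) = rev (iota t.+1 (m + n - t.+1)) ++ t :: rev (iota m (t - m)).
Proof.
move=> H.
rewrite {1}(_ : n = (t - m) + (m + n - t.+1).+1); last by lia.
rewrite iotaD rev_cat.
have -> : m + (t - m) = t by lia.
by rewrite /= rev_cons cat_rcons.
Qed.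

Definition wunf la mu := flatten [seq row_boxes la mu s | s <- rev (iota 0 (size la))].

Definition mid la mu a b := flatten [seq row_boxes la mu s | s <- rev (iota a (b - a))].

Definition Seg la mu r c t d :=
  rowpart t d (nth 0 la t) ++ mid la mu r.+1 t ++ rowpart r (nth 0 mu r) c.

Lemma mid_S la mu a t : a <= t -> mid la mu a t.+1 = row_boxes la mu t ++ mid la mu a t.
Proof.
move=> H; rewrite /mid.
have -> : t.+1 - a = (t - a).+1 by lia.
rewrite -addn1 iotaD rev_cat /=.
by have -> : a + (t - a) = t by lia.
Qed.

Lemma mid_nil la mu a : mid la mu a a = [::].
Proof. by rewrite /mid subnn. Qed.

Lemma decomp0 la mu r c : in_shape la mu (r, c) ->
  exists A B, wunf la mu = A ++ (r, c) :: B /\ (r, c) \notin A /\ (r, c) \notin B /\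
   (exists A0, A = A0 ++ rowpart r (nth 0 mu r) c /\
     (forall z, z \in A0 -> r < z.1)) /\
   B = rowpart r c.+1 (nth 0 la r) ++ flatten [seq row_boxes la mu s | s <- rev (iota 0 r)].
Proof.
rewrite /in_shape /= => /andP [H1 H2].
have Hr : r < size la.
  by case: (ltnP r (size la)) => // H; move: H2; rewrite nth_default.
rewrite /wunf (@rev_iota_split 0 (size la) r); last by lia.
rewrite map_cat flatten_cat /= row_boxesE.
rewrite (@rowpart_split r (nth 0 mu r) c (nth 0 la r)); last by lia.
rewrite (@rowpart_cons r c); last by lia.
set A0 := flatten _.
exists (A0 ++ rowpart r (nth 0 mu r) c).
exists (rowpart r c.+1 (nth 0 la r) ++ flatten [seq row_boxes la mu s | s <- rev (iota 0 (r - 0))]).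
have HA0 : forall z, z \in A0 -> r < z.1.
  move=> z /mem_rows [+ _]; rewrite mem_rev mem_iota => /andP [? ?]; lia.
split; first by rewrite -!catA.
split.
  rewrite mem_cat negb_or; apply/andP; split.
    by apply/negP => /HA0 /=; lia.
  by apply/negP => /mem_rowpart /= ; lia.
split.
  rewrite mem_cat negb_or; apply/andP; split.
    by apply/negP => /mem_rowpart /= ; lia.
  by apply/negP => /mem_rows [+ _] /=; rewrite mem_rev mem_iota => /andP [H3 H4]; simpl in H3, H4; lia.
split; first by exists A0.
by rewrite subn0.
Qed.

Lemma decomp_seg la mu r c t d : skew_shape la mu -> in_shape la mu (r, c) ->
  r < t < size la -> nth 0 mu t <= d <= nth 0 la t ->
  exists P, wunf la mu = P ++ Seg la mu r c t d ++ (r, c) :: 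
    (rowpart r c.+1 (nth 0 la r) ++ flatten [seq row_boxes la mu s | s <- rev (iota 0 r)]).
Proof.
move=> Hsk Hx Ht Hd.
move: Hx; rewrite /in_shape /= => /andP [H1 H2].
rewrite /wunf.
rewrite (@rev_iota_split 0 (size la) r); last by lia.
rewrite (@rev_iota_split (r.+1) (0 + size la - r.+1) t); last by lia.
rewrite !map_cat !flatten_cat /=.
rewrite [row_boxes la mu t]row_boxesE (@rowpart_split t (nth 0 mu t) d (nth 0 la t)) //.
exists (flatten [seq row_boxes la mu s | s <- rev (iota t.+1 (r.+1 + (0 + size la - r.+1) - t.+1))]
   ++ rowpart t (nth 0 mu t) d).
rewrite /Seg /mid.
rewrite [row_boxes la mu r]row_boxesE.
rewrite (@rowpart_split r (nth 0 mu r) c (nth 0 la r)); last by lia.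
rewrite (@rowpart_cons r c); last by lia.
by rewrite subn0 -!catA.
Qed.


Lemma split_uniq (A : eqType) (x : A) U V u v :
  U ++ x :: V = u ++ x :: v -> x \notin U -> x \notin V -> U = u /\ V = v.
Proof.
elim: U u => [|y U IH] [|z u] //=.
- by case=> ->.
- case=> -> -> _; rewrite mem_cat inE eqxx orbT //.
- by case=> -> _; rewrite inE eqxx.
- case=> -> H; rewrite inE negb_or => /andP [_ HU] HV.
  by have [-> ->] := IH u H HU HV.
Qed.

Lemma reading_wunf la mu T : reading_boxes la mu T = [seq p <- wunf la mu | ~~ odd (T p)].
Proof. by []. Qed.

Lemma free_props i la mu T x : rightmost_free_i i la mu T = Some x ->
  T x = uletter i /\ in_shape la mu x /\
  (forall A B, reading_boxes la mu T = A ++ x :: B -> x \notin A -> x \notin B ->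
     (foldl (bracket_step i T) (0,None) A).1 = 0 /\
     (forall p B2, B = p :: B2 -> T p <> uletter i)).
Proof.
rewrite /rightmost_free_i => /fold_decomp [u [v [Hw [Hx [Hu Hv]]]]].
split=> //; split.
  have : x \in reading_boxes la mu T by rewrite Hw mem_cat inE eqxx orbT.
  by rewrite reading_wunf mem_filter => /andP [_ /mem_rows []].
move=> A B HAB HA HB.
have [H1 H2] : A = u /\ B = v.
  apply: split_uniq HA HB; by rewrite -HAB.
split; first by rewrite H1.
move=> p B2 HB2 Hp.
have := Hv [::] p B2; rewrite -H2 HB2 => /(_ erefl Hp).
rewrite foldl_cat /=.
case E: (foldl (bracket_step i T) (0, None) u) => [o cc].
rewrite E /= in Hu; rewrite Hu bs_I0 //.
Qed.

Lemma filter_decomp la mu T r c : in_shape la mu (r, c) -> ~~ odd (T (r, c)) ->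
  exists A0, reading_boxes la mu T =
     [seq p <- A0 ++ rowpart r (nth 0 mu r) c | ~~ odd (T p)] ++ (r, c) ::
     [seq p <- rowpart r c.+1 (nth 0 la r) ++
        flatten [seq row_boxes la mu s | s <- rev (iota 0 r)] | ~~ odd (T p)] /\
   (r, c) \notin [seq p <- A0 ++ rowpart r (nth 0 mu r) c | ~~ odd (T p)] /\
   (r, c) \notin [seq p <- rowpart r c.+1 (nth 0 la r) ++
        flatten [seq row_boxes la mu s | s <- rev (iota 0 r)] | ~~ odd (T p)].
Proof.
move=> Hx He.
have [A [B [HW [HA [HB [[A0 [HA0 _]] HB']]]]]] := decomp0 Hx.
exists A0.
move: HA HB; rewrite HA0 HB' => HA HB.
rewrite reading_wunf HW filter_cat /= He -HA0 -HB'.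
split=> //.
by rewrite !mem_filter !negb_and HA0 HB' HA HB !orbT.
Qed.

Lemma E_not_I i la mu T r c : rightmost_free_i i la mu T = Some (r, c) ->
  in_shape la mu (r, c.+1) -> T (r, c.+1) <> uletter i.
Proof.
move=> Hf HE HEI.
have [Hx [Hxs Hp]] := free_props Hf.
have Hev : ~~ odd (T (r, c)) by rewrite Hx /uletter odd_double.
have [A0 [Hw [HA HB]]] := filter_decomp Hxs Hev.
have [_ H] := Hp _ _ Hw HA HB.
move: HE; rewrite /in_shape /= => /andP [_ HE].
apply: (H (r, c.+1) _ _ HEI).
rewrite (@rowpart_cons r c.+1) //= HEI /uletter odd_double /=.
by [].
Qed.

Lemma seg_count i la mu T r c t d : skew_shape la mu ->
  rightmost_free_i i la mu T = Some (r, c) ->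
  r < t < size la -> nth 0 mu t <= d <= nth 0 la t ->
  count (fun p => T p == uletter i.+1) (Seg la mu r c t d) <=
  count (fun p => T p == uletter i) (Seg la mu r c t d).
Proof.
move=> Hsk Hf Ht Hd.
have [Hx [Hxs Hp]] := free_props Hf.
have Hev : ~~ odd (T (r, c)) by rewrite Hx /uletter odd_double.
have [A [B [HW [HA [HB [[A0 [HA0 _]] HB']]]]]] := decomp0 Hxs.
have [P HP] := decomp_seg Hsk Hxs Ht Hd.
have [HAe _] : A = P ++ Seg la mu r c t d /\ B = B.
  by apply: split_uniq HA HB; rewrite -HW HP HB' catA.
have Hw : reading_boxes la mu T = [seq p <- P | ~~ odd (T p)] ++
     [seq p <- Seg la mu r c t d | ~~ odd (T p)] ++ (r, c) :: [seq p <- B | ~~ odd (T p)].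
  by rewrite reading_wunf HW HAe !filter_cat /= Hev !catA.
rewrite catA in Hw.
have HA' : (r, c) \notin [seq p <- P | ~~ odd (T p)] ++ [seq p <- Seg la mu r c t d | ~~ odd (T p)].
  by rewrite -filter_cat -HAe mem_filter negb_and HA orbT.
have HB2 : (r, c) \notin [seq p <- B | ~~ odd (T p)] by rewrite mem_filter negb_and HB orbT.
have [H0 _] := Hp _ _ Hw HA' HB2.
rewrite foldl_cat in H0.
case E: (foldl (bracket_step i T) (0, None) [seq p <- P | ~~ odd (T p)]) => [o cc].
rewrite E in H0.
have := step_cnt i T [seq p <- Seg la mu r c t d | ~~ odd (T p)] o cc.
rewrite H0 !count_filter.
have -> : count (predI (fun p => T p == uletter i.+1) (fun p => ~~ odd (T p))) (Seg la mu r c t d)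
   = count (fun p => T p == uletter i.+1) (Seg la mu r c t d).
  apply: eq_count => p /=; case: eqP => // ->; by rewrite /uletter odd_double.
have -> : count (predI (fun p => T p == uletter i) (fun p => ~~ odd (T p))) (Seg la mu r c t d)
   = count (fun p => T p == uletter i) (Seg la mu r c t d).
  apply: eq_count => p /=; case: eqP => // ->; by rewrite /uletter odd_double.
lia.
Qed.


Lemma uJ i : uletter i.+1 = i.*2.+2. Proof. by rewrite /uletter doubleS. Qed.
Lemma pJ i : pletter i.+1 = i.*2.+1. Proof. by rewrite /pletter doubleS. Qed.
Lemma uI i : uletter i = i.*2. Proof. by []. Qed.

Lemma inS la mu a b : in_shape la mu (a, b) = (nth 0 mu a <= b) && (b < nth 0 la a).
Proof. by []. Qed.

Lemma jjE la mu (T : pos -> nat) i p :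
  is_jj i.+1 (cval la mu T p) = in_shape la mu p && ((T p == i.*2.+1) || (T p == i.*2.+2)).
Proof.
rewrite /is_jj /cval pJ uJ; case: (in_shape la mu p) => //=.
Qed.

Lemma mu_mono la mu a b : skew_shape la mu -> a <= b -> nth 0 mu b <= nth 0 mu a.
Proof. by case=> _ [Hm _]; apply: sorted_geq_nth. Qed.
Lemma la_mono la mu a b : skew_shape la mu -> a <= b -> nth 0 la b <= nth 0 la a.
Proof. by case=> [Hl _]; apply: sorted_geq_nth. Qed.

Lemma pr_eq k la mu T t c1 c2 i : primed_tableau k la mu T ->
  in_shape la mu (t, c1) -> in_shape la mu (t, c2) ->
  T (t, c1) = i.*2.+1 -> T (t, c2) = i.*2.+1 -> c1 = c2.
Proof.
case=> _ _ _ Hpr _ H1 H2 E1 E2; apply: (Hpr t c1 c2 H1 H2).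
  by rewrite E1 /= odd_double.
by rewrite E1 E2.
Qed.

Lemma uc_eq k la mu T r1 r2 c v : primed_tableau k la mu T ->
  in_shape la mu (r1, c) -> in_shape la mu (r2, c) -> ~~ odd v ->
  T (r1, c) = v -> T (r2, c) = v -> r1 = r2.
Proof.
case=> _ _ _ _ Hu H1 H2 Hv E1 E2; apply: (Hu r1 r2 c H1 H2).
  by rewrite E1.
by rewrite E1 E2.
Qed.

Lemma ev2 i : ~~ odd (i.*2). Proof. by rewrite odd_double. Qed.
Lemma ev2S i : ~~ odd (i.*2.+2). Proof. by rewrite /= odd_double. Qed.

Lemma rowT k la mu T t c1 c2 : primed_tableau k la mu T -> c1 <= c2 ->
  in_shape la mu (t, c1) -> in_shape la mu (t, c2) -> T (t, c1) <= T (t, c2).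
Proof. by case=> _ H _ _ _; apply: H. Qed.
Lemma colT k la mu T r1 r2 c : primed_tableau k la mu T -> r1 <= r2 ->
  in_shape la mu (r1, c) -> in_shape la mu (r2, c) -> T (r1, c) <= T (r2, c).
Proof. by case=> _ _ H _ _; apply: H. Qed.

Lemma both_jj k la mu T i t d : skew_shape la mu -> primed_tableau k la mu T ->
  in_shape la mu (t, d) -> (T (t,d) = i.*2.+1 \/ T (t,d) = i.*2.+2) ->
  in_shape la mu (t.+1, d) -> (T (t.+1,d) = i.*2.+1 \/ T (t.+1,d) = i.*2.+2) ->
  0 < d -> in_shape la mu (t, d.-1) -> (T (t,d.-1) = i.*2.+1 \/ T (t,d.-1) = i.*2.+2) ->
  False.
Proof.
move=> Hsk Ht Hp Vp HS VS Hd HW VW.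
have Hm := @mu_mono la mu t t.+1 Hsk (leqnSn t).
have HSW : in_shape la mu (t.+1, d.-1).
  move: Hp HS HW; rewrite !inS => /andP [? ?] /andP [? ?] /andP [? ?]; apply/andP; lia.
have a1 := rowT Ht (leq_pred d) HW Hp.
have a2 := colT Ht (leqnSn t) HW HSW.
have a3 := rowT Ht (leq_pred d) HSW HS.
have a4 := colT Ht (leqnSn t) Hp HS.
have b1 : T (t, d.-1) = i.*2.+1 -> T (t, d) = i.*2.+1 -> False.
  by move=> E1 E2; have := pr_eq Ht HW Hp E1 E2; lia.
have b2 : T (t.+1, d.-1) = i.*2.+1 -> T (t.+1, d) = i.*2.+1 -> False.
  by move=> E1 E2; have := pr_eq Ht HSW HS E1 E2; lia.
have b3 : T (t, d) = i.*2.+2 -> T (t.+1, d) = i.*2.+2 -> False.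
  by move=> E1 E2; have := uc_eq Ht Hp HS (ev2S i) E1 E2; lia.
have b4 : T (t, d.-1) = i.*2.+2 -> T (t.+1, d.-1) = i.*2.+2 -> False.
  by move=> E1 E2; have := uc_eq Ht HW HSW (ev2S i) E1 E2; lia.
lia.
Qed.


Definition cnt (T : pos -> nat) v (s : seq pos) := count (fun z => T z == v) s.

Lemma cnt_cat T v s1 s2 : cnt T v (s1 ++ s2) = cnt T v s1 + cnt T v s2.
Proof. by rewrite /cnt count_cat. Qed.
Lemma cnt_cons T v z s : cnt T v (z :: s) = (T z == v) + cnt T v s.
Proof. by []. Qed.

Lemma cnt0 (T : pos -> nat) v (s : seq pos) :
  (forall a b : nat, (a, b) \in s -> T (a, b) <> v) -> cnt T v s = 0.
Proof.
move=> H; apply/eqP; rewrite /cnt eqn0Ngt -has_count; apply/hasPn.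
by move=> [a b] Hab; apply/eqP; apply: H.
Qed.

Lemma cnt_last T v t m e : cnt T v (rowpart t m e) <= cnt T v (rowpart t m e.-1) + 1.
Proof.
case: (ltnP m e) => H.
  rewrite (@rowpart_rcons t m e) // -cats1 cnt_cat /=; lia.
rewrite /rowpart; have -> : e - m = 0 by lia.
by [].
Qed.

Lemma Seg_S la mu T v r c t d : r < t -> nth 0 mu t <= d <= nth 0 la t ->
  cnt T v (Seg la mu r c t.+1 d) = cnt T v (rowpart t.+1 d (nth 0 la t.+1)) +
     cnt T v (rowpart t (nth 0 mu t) d) + cnt T v (Seg la mu r c t d).
Proof.
move=> Hr Hd; rewrite /Seg mid_S // row_boxesE (@rowpart_split t _ d) //.
rewrite !cnt_cat; lia.
Qed.

Lemma Seg_W la mu T v r c t d : 0 < d -> d.-1 < nth 0 la t ->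
  cnt T v (Seg la mu r c t d.-1) = (T (t, d.-1) == v) + cnt T v (Seg la mu r c t d).
Proof.
move=> H1 H2; rewrite /Seg (@rowpart_cons t d.-1) //.
by have -> : d.-1.+1 = d by lia.
Qed.

Lemma no_I_right k la mu T t d v : primed_tableau k la mu T ->
  in_shape la mu (t, d) -> v < T (t, d) ->
  cnt T v (rowpart t d (nth 0 la t)) = 0.
Proof.
move=> Ht Hp Hv; apply/eqP; rewrite /cnt eqn0Ngt -has_count; apply/hasPn.
move=> [a b] /mem_rowpart /= [-> /andP [H1 H2]].
have Hb : in_shape la mu (t, b).
  move: Hp; rewrite !inS => /andP [? ?]; apply/andP; lia.
have := rowT Ht H1 Hp Hb.
apply/contraL => /eqP ->; lia.
Qed.

Lemma zero_third k la mu T i t d : skew_shape la mu -> primed_tableau k la mu T ->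
  in_shape la mu (t, d) -> T (t, d) <= i.*2.+2 -> 0 < t ->
  (0 < d -> in_shape la mu (t, d.-1) -> T (t, d.-1) <> i.*2.+1 /\ T (t, d.-1) <> i.*2.+2) ->
  cnt T (i.*2) (rowpart t.-1 (nth 0 mu t.-1) d) = 0.
Proof.
move=> Hsk Ht Hp Hv Ht0 Hleft.
apply: cnt0 => a b /mem_rowpart /= [-> /andP [H1 H2]] HI.
have Hm := @mu_mono la mu t.-1 t Hsk (leq_pred t).
have Hl := @la_mono la mu t.-1 t Hsk (leq_pred t).
have Hb : in_shape la mu (t, b).
  move: Hp; rewrite !inS => /andP [? ?]; apply/andP; lia.
have Hb' : in_shape la mu (t.-1, b).
  move: Hp; rewrite !inS => /andP [? ?]; apply/andP; lia.
have HW : in_shape la mu (t, d.-1).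
  move: Hp; rewrite !inS => /andP [? ?]; apply/andP; lia.
have [n1 n2] := Hleft (leq_ltn_trans (leq0n _) H2) HW.
have a1 := rowT Ht (leq_pred d) HW Hp.
have a2 : b <= d.-1 by lia.
have a3 := rowT Ht a2 Hb HW.
have a4 := colT Ht (leq_pred t) Hb' Hb.
have b1 : T (t, b) = i.*2 -> False.
  by move=> E; have := uc_eq Ht Hb' Hb (ev2 i) HI E; lia.
lia.
Qed.

Definition Inv la mu T i r c X (p : pos) : Prop :=
  r < p.1 /\ in_shape la mu p /\ (T p = i.*2.+1 \/ T p = i.*2.+2) /\
  cnt T (i.*2) (Seg la mu r c p.1 p.2) + (T p == i.*2.+2) + X <=
  cnt T (i.*2.+2) (Seg la mu r c p.1 p.2) + cnt T (i.*2) (rowpart p.1.-1 (nth 0 mu p.1.-1) p.2).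

Lemma Inv_step k la mu T i r c X p : skew_shape la mu -> primed_tableau k la mu T ->
  Inv la mu T i r c X p -> Inv la mu T i r c X (ribbon_step la mu T i.+1 p).
Proof.
move=> Hsk Ht; case: p => t d [/= Hr [Hp [Vp Hc]]].
rewrite /ribbon_step /= !jjE.
case HS: (in_shape la mu (t.+1, d) && _).
  move/andP: HS => [HS VS].
  have VS' : T (t.+1, d) = i.*2.+1 \/ T (t.+1, d) = i.*2.+2.
    by case/orP: VS => /eqP; [left | right].
  split=> /=; first lia.
  split=> //; split=> //.
  have Hdd : nth 0 mu t <= d <= nth 0 la t by move: Hp; rewrite inS => /andP [? ?]; lia.
  rewrite !Seg_S //.
  have Hd1 : d < nth 0 la t.+1 by move: HS; rewrite inS => /andP [? ?].
  rewrite (@rowpart_cons t.+1 d) // !cnt_cons.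
  have -> : cnt T (i.*2) (rowpart t.+1 d.+1 (nth 0 la t.+1)) = 0.
    case: (ltnP d.+1 (nth 0 la t.+1)) => Hd2.
      apply: (no_I_right Ht) => //.
        move: HS; rewrite !inS => /andP [? ?]; apply/andP; lia.
      have Hd3 : d <= d.+1 by [].
      have H2 : in_shape la mu (t.+1, d.+1) by move: HS; rewrite !inS => /andP [? ?]; apply/andP; lia.
      have := rowT Ht Hd3 HS H2; lia.
    by rewrite /rowpart; have -> : nth 0 la t.+1 - d.+1 = 0 by lia.
  have Z : cnt T (i.*2) (rowpart t.-1 (nth 0 mu t.-1) d) = 0.
    apply: (zero_third Hsk Ht Hp); [lia | lia |].
    move=> Hd0 HW; split=> E.
      by apply: (both_jj Hsk Ht Hp Vp HS VS' Hd0 HW); left.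
    by apply: (both_jj Hsk Ht Hp Vp HS VS' Hd0 HW); right.
  rewrite Z in Hc.
  have HI : (T (t.+1, d) == i.*2) = false by apply/eqP; lia.
  rewrite HI /=.
  case: eqP => _; lia.
case HW: ((0 < d) && _); last by [].
move/andP: HW => [Hd0 /andP [HW VW]].
have VW' : T (t, d.-1) = i.*2.+1 \/ T (t, d.-1) = i.*2.+2.
  by case/orP: VW => /eqP; [left | right].
have Tp : T (t, d) = i.*2.+2.
  have := rowT Ht (leq_pred d) HW Hp.
  case: Vp => // E1 H; exfalso.
  have E2 : T (t, d.-1) = i.*2.+1 by lia.
  have := pr_eq Ht HW Hp E2 E1; lia.
split=> //; split=> //; split=> //=.
have Hdl : d.-1 < nth 0 la t by move: HW; rewrite inS => /andP [? ?].
rewrite !Seg_W //.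
have := cnt_last T (i.*2) t.-1 (nth 0 mu t.-1) d.
rewrite Tp eqxx in Hc.
have HI : (T (t, d.-1) == i.*2) = false by apply/eqP; lia.
rewrite HI.
case: eqP => _ /=; lia.
Qed.


Lemma inS_size la mu a b : in_shape la mu (a, b) -> a < size la.
Proof.
rewrite inS => /andP [_ H]; case: (ltnP a (size la)) => // H2.
by move: H; rewrite nth_default.
Qed.

Lemma Inv_init k la mu T i r c : primed_tableau k la mu T ->
  in_shape la mu (r.+1, c) -> (T (r.+1, c) = i.*2.+1 \/ T (r.+1, c) = i.*2.+2) ->
  Inv la mu T i r c (cnt T (i.*2.+2) (rowpart r.+1 c.+1 (nth 0 la r.+1))) (r.+1, c).
Proof.
move=> Ht HS VS; split=> //=; split=> //; split=> //.
rewrite /Seg mid_nil /= !cnt_cat.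
have Hc : c < nth 0 la r.+1 by move: HS; rewrite inS => /andP [].
have := no_I_right Ht HS (_ : i.*2 < T (r.+1, c)).
rewrite (@rowpart_cons r.+1 c) // !cnt_cons => H.
rewrite H; last by lia.
have HI : (T (r.+1, c) == i.*2) = false by apply/eqP; lia.
move: H; rewrite HI /=; lia.
Qed.

Definition phi (la : seq nat) (p : pos) := size la - p.1 + p.2.

Lemma step_cases la mu T j (p : pos) :
  (ribbon_step la mu T j p = (p.1.+1, p.2) /\ in_shape la mu (p.1.+1, p.2)) \/
  (ribbon_step la mu T j p = (p.1, p.2.-1) /\ 0 < p.2) \/
  ribbon_step la mu T j p = p.
Proof.
rewrite /ribbon_step.
case H: (is_jj j (cval la mu T (p.1.+1, p.2))).
  left; split=> //; move: H; rewrite /is_jj /cval; by case: (in_shape _ _ _).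
case H2: ((0 < p.2) && _); last by right; right.
by right; left; move/andP: H2 => [].
Qed.

Lemma iter_prop k la mu T i r c X S : skew_shape la mu -> primed_tableau k la mu T ->
  Inv la mu T i r c X S -> forall n,
  Inv la mu T i r c X (iter n (ribbon_step la mu T i.+1) S) /\
  (ribbon_step la mu T i.+1 (iter n (ribbon_step la mu T i.+1) S) =
     iter n (ribbon_step la mu T i.+1) S \/
   phi la (iter n (ribbon_step la mu T i.+1) S) + n = phi la S).
Proof.
move=> Hsk Ht HS; elim=> [|n [IH1 IH2]]; first by split=> //; right; rewrite addn0.
split; first by rewrite iterS; exact: (Inv_step Hsk Ht IH1).
rewrite iterS.
case: IH2 => [E | E].
  by left; rewrite E E.
set p := iter n _ S in IH1 E *.
have [[E2 H2] | [[E2 H2] | E2]] := step_cases la mu T i.+1 p.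
- right; rewrite E2 /phi /=; move: E; rewrite /phi.
  have := inS_size H2; lia.
- right; rewrite E2 /phi /=; move: E; rewrite /phi; lia.
- by left; rewrite !E2.
Qed.

Lemma ribbon_result k la mu T i r c : skew_shape la mu -> primed_tableau k la mu T ->
  rightmost_free_i i la mu T = Some (r, c) ->
  in_shape la mu (r.+1, c) -> (T (r.+1, c) = i.*2.+1 \/ T (r.+1, c) = i.*2.+2) ->
  let q := ribbon_end la mu T i.+1 (r.+1, c) in
  in_shape la mu q /\ r < q.1 /\ T q = i.*2.+1 /\
      cnt T (i.*2.+2) (rowpart r.+1 c.+1 (nth 0 la r.+1)) = 0 /\
      (in_shape la mu (q.1.+1, q.2) -> T (q.1.+1, q.2) <> i.*2.+1 /\ T (q.1.+1, q.2) <> i.*2.+2) /\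
      (0 < q.2 -> in_shape la mu (q.1, q.2.-1) -> T (q.1, q.2.-1) <> i.*2.+1 /\ T (q.1, q.2.-1) <> i.*2.+2).
Proof.
move=> Hsk Ht Hf HS VS q.
set X := cnt T (i.*2.+2) (rowpart r.+1 c.+1 (nth 0 la r.+1)).
have HI := Inv_init Ht HS VS.
have [[Hq1 [Hq2 [Vq Hc]]] Hfix] := iter_prop Hsk Ht HI (size la + head 0 la).
rewrite -/(ribbon_end la mu T i.+1 (r.+1, c)) -/q in Hq1 Hq2 Vq Hc Hfix.
have Hfx : ribbon_step la mu T i.+1 q = q.
  case: Hfix => // E; exfalso; move: E; rewrite /phi /=.
  have := inS_size HS.
  have : c < head 0 la.
    have := @la_mono la mu 0 r.+1 Hsk (leq0n _).
    move: HS; rewrite inS => /andP [_ ?]; rewrite -nth0; lia.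
  lia.
clear Hfix; clearbody q; case: q Hq1 Hq2 Vq Hc Hfx => a b /= Hq1 Hq2 Vq Hc Hfx.
have Hsouth : in_shape la mu (a.+1, b) -> T (a.+1, b) <> i.*2.+1 /\ T (a.+1, b) <> i.*2.+2.
  move=> H; move: Hfx; rewrite /ribbon_step /= jjE H /=.
  case E1: (_ || _); first by case=> ?; lia.
  by move=> _; move/negbT: E1 => /norP [/eqP ? /eqP ?].
have Hwest : 0 < b -> in_shape la mu (a, b.-1) -> T (a, b.-1) <> i.*2.+1 /\ T (a, b.-1) <> i.*2.+2.
  move=> Hb H; move: Hfx; rewrite /ribbon_step /= !jjE H Hb /=.
  case: (_ && _); first by case=> ?; lia.
  case E1: (_ || _); first by case=> ?; lia.
  by move=> _; move/negbT: E1 => /norP [/eqP ? /eqP ?].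
have Z := zero_third Hsk Ht Hq2 (_ : T (a, b) <= i.*2.+2) (_ : 0 < a) Hwest.
rewrite Z in Hc; [|lia|lia].
have Hab : nth 0 mu a <= b <= nth 0 la a by move: Hq2; rewrite inS => /andP [? ?]; lia.
have Hsz := inS_size Hq2.
have Hra : r < a < size la by lia.
have Hsc := @seg_count i la mu T r c a b Hsk Hf Hra Hab.
rewrite -/(cnt T (uletter i.+1) _) -/(cnt T (uletter i) _) uJ uI in Hsc.
split=> //; split=> //; split.
  case: Vq => // E; move: Hc; rewrite E eqxx; lia.
split; last by split.
move: Hc; lia.
Qed.


Lemma inS_row la mu t c1 c2 c : in_shape la mu (t, c1) -> in_shape la mu (t, c2) ->
  c1 <= c <= c2 -> in_shape la mu (t, c).
Proof. rewrite !inS => /andP [? ?] /andP [? ?] ?; apply/andP; lia. Qed.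

Lemma inS_col la mu r1 r2 r c : skew_shape la mu -> in_shape la mu (r1, c) ->
  in_shape la mu (r2, c) -> r1 <= r <= r2 -> in_shape la mu (r, c).
Proof.
move=> Hsk H1 H2 /andP [Ha Hb].
have := mu_mono Hsk Ha; have := la_mono Hsk Hb.
move: H1 H2; rewrite !inS => /andP [? ?] /andP [? ?] ? ?; apply/andP; lia.
Qed.

Lemma tab_update k la mu T T' (C : pos -> bool) :
  primed_tableau k la mu T ->
  (forall z, T z <= T' z) ->
  (forall z, ~~ C z -> T' z = T z) ->
  (forall z, C z -> in_shape la mu z -> T' z <= uletter k) ->
  (forall t c1 c2 : nat, C (t, c1) -> c1 < c2 -> in_shape la mu (t, c1) -> in_shape la mu (t, c2) ->
     T' (t, c1) <= T' (t, c2)) ->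
  (forall r1 r2 c : nat, C (r1, c) -> r1 < r2 -> in_shape la mu (r1, c) -> in_shape la mu (r2, c) ->
     T' (r1, c) <= T' (r2, c)) ->
  (forall t c1 c2 : nat, C (t, c1) -> c1 != c2 -> in_shape la mu (t, c1) -> in_shape la mu (t, c2) ->
     odd (T' (t, c1)) -> T' (t, c1) <> T' (t, c2)) ->
  (forall r1 r2 c : nat, C (r1, c) -> r1 != r2 -> in_shape la mu (r1, c) -> in_shape la mu (r2, c) ->
     ~~ odd (T' (r1, c)) -> T' (r1, c) <> T' (r2, c)) ->
  primed_tableau k la mu T'.
Proof.
move=> [Hb Hr Hc Hp Hu] Hge Heq HB HR HC HP HU; split.
- move=> p Hs; case HCp: (C p).
    by have := Hb p Hs; have := Hge p; have := HB p HCp Hs; lia.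
  by rewrite (Heq _ (negbT HCp)); apply: Hb.
- move=> t c1 c2 H12 H1 H2.
  have [Hlt | Hge'] := ltnP c1 c2; last by have -> : c2 = c1 by lia.
  case HC1: (C (t, c1)); first exact: HR.
  by rewrite (Heq _ (negbT HC1)); have := Hr t c1 c2 H12 H1 H2; have := Hge (t, c2); lia.
- move=> r1 r2 c H12 H1 H2.
  have [Hlt | Hge'] := ltnP r1 r2; last by have -> : r2 = r1 by lia.
  case HC1: (C (r1, c)); first exact: HC.
  by rewrite (Heq _ (negbT HC1)); have := Hc r1 r2 c H12 H1 H2; have := Hge (r2, c); lia.
- move=> t c1 c2 H1 H2 Ho E.
  case: (eqVneq c1 c2) => // Hne.
  case HC1: (C (t, c1)); first by exfalso; apply: (HP t c1 c2).
  case HC2: (C (t, c2)).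
    by exfalso; apply: (HP t c2 c1 HC2 _ H2 H1 _ (esym E)); [rewrite eq_sym | rewrite -E].
  move: Ho E; rewrite (Heq _ (negbT HC1)) (Heq _ (negbT HC2)) => Ho E; exact: (Hp t c1 c2 H1 H2 Ho E).
- move=> r1 r2 c H1 H2 Ho E.
  case: (eqVneq r1 r2) => // Hne.
  case HC1: (C (r1, c)); first by exfalso; apply: (HU r1 r2 c).
  case HC2: (C (r2, c)).
    by exfalso; apply: (HU r2 r1 c HC2 _ H2 H1 _ (esym E)); [rewrite eq_sym | rewrite -E].
  move: Ho E; rewrite (Heq _ (negbT HC1)) (Heq _ (negbT HC2)) => Ho E; exact: (Hu r1 r2 c H1 H2 Ho E).
Qed.


Lemma pne (a b r c : nat) : (a != r) || (b != c) -> ((a, b) == (r, c)) = false.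
Proof. by move=> H; apply/negbTE; rewrite xpair_eqE negb_and. Qed.

Ltac pneq := apply/orP; first [left; apply/eqP; lia | right; apply/eqP; lia].

Lemma tab_F1 k la mu T i r c : skew_shape la mu -> primed_tableau k la mu T ->
  1 <= i -> i <= k - 1 -> in_shape la mu (r, c) -> T (r, c) = i.*2 ->
  (forall c2, c < c2 -> in_shape la mu (r, c2) -> i.*2.+2 <= T (r, c2)) ->
  (forall r2, r < r2 -> in_shape la mu (r2, c) -> i.*2.+2 < T (r2, c)) ->
  primed_tableau k la mu (fun z => if z == (r, c) then i.*2.+2 else T z).
Proof.
move=> Hsk Ht Hi1 Hi2 Hx Tx HE HS.
apply: (tab_update (C := fun z => z == (r, c)) Ht).
- by move=> z; case: eqP => // ->; lia.
- by move=> z /negbTE ->.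
- by move=> z /eqP ->; rewrite eqxx /uletter; lia.
- move=> t c1 c2 /eqP [-> ->] H12 _ H2; rewrite eqxx pne; last by pneq.
  exact: HE.
- move=> r1 r2 c0 /eqP [-> ->] H12 _ H2; rewrite eqxx pne; last by pneq.
  by have := HS r2 H12 H2; lia.
- move=> t c1 c2 /eqP [-> ->]; rewrite eqxx /= odd_double //.
- move=> r1 r2 c0 /eqP [-> ->] H12 _ H2 _; rewrite eqxx pne; last by pneq.
  case: (ltnP r2 r) => H.
    by have := colT Ht (ltnW H) H2 Hx; lia.
  have H3 : r < r2 by rewrite ltn_neqAle H12 H.
  by have := HS r2 H3 H2; lia.
Qed.

Ltac ifs := repeat (let H := fresh "Hif" in case: ifP => H; rewrite ?xpair_eqE in H); try lia.

Lemma tab_F2 k la mu T i r c : skew_shape la mu -> primed_tableau k la mu T ->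
  1 <= i -> i <= k - 1 -> in_shape la mu (r, c) -> T (r, c) = i.*2 ->
  in_shape la mu (r, c.+1) -> T (r, c.+1) = i.*2.+1 ->
  (forall r2, r < r2 -> in_shape la mu (r2, c.+1) -> i.*2.+2 < T (r2, c.+1)) ->
  primed_tableau k la mu (fun z => if z == (r, c) then i.*2.+1
                                   else if z == (r, c.+1) then i.*2.+2 else T z).
Proof.
move=> Hsk Ht Hi1 Hi2 Hx Tx HE TE HSE.
have Hright : forall c2, c.+1 < c2 -> in_shape la mu (r, c2) -> i.*2.+2 <= T (r, c2).
  move=> c2 H1 H2; have := rowT Ht (ltnW H1) HE H2.
  have : T (r, c2) = i.*2.+1 -> False by move=> E; have := pr_eq Ht HE H2 TE E; lia.
  lia.
have Hleft : forall c2, c2 < c -> in_shape la mu (r, c2) -> T (r, c2) <= i.*2.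
  by move=> c2 H1 H2; have := rowT Ht (ltnW H1) H2 Hx; lia.
have Hbelow : forall r2, r < r2 -> in_shape la mu (r2, c) -> i.*2 < T (r2, c).
  move=> r2 H1 H2; have := colT Ht (ltnW H1) Hx H2.
  have : T (r2, c) = i.*2 -> False by move=> E; have := uc_eq Ht Hx H2 (ev2 i) Tx E; lia.
  lia.
have Habove : forall r2, r2 < r -> in_shape la mu (r2, c.+1) -> T (r2, c.+1) <= i.*2.+1.
  by move=> r2 H1 H2; have := colT Ht (ltnW H1) H2 HE; lia.
apply: (tab_update (C := fun z => (z == (r, c)) || (z == (r, c.+1))) Ht).
- move=> z; case: ifP => [/eqP -> | _]; first by lia.
  case: ifP => [/eqP -> | _]; lia.
- by move=> z; rewrite negb_or => /andP [/negbTE -> /negbTE ->].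
- move=> z /orP [] /eqP -> _; rewrite /uletter; ifs.
- move=> t c1 c2 /orP [] /eqP [-> ->] H12 H1 H2.
    case: (ltnP c.+1 c2) => H3.
      by have := Hright c2 H3 H2; ifs.
    ifs.
  by have := Hright c2 H12 H2; ifs.
- move=> r1 r2 c0 /orP [] /eqP [-> ->] H12 H1 H2.
    by have := Hbelow r2 H12 H2; ifs.
  by have := HSE r2 H12 H2; ifs.
- move=> t c1 c2 /orP [] /eqP [-> ->] H12 H1 H2; last first.
    by move=> Ho; exfalso; move: Ho; ifs; rewrite /= odd_double.
  move=> _.
  case: (ltnP c2 c) => H3.
    by have := Hleft c2 H3 H2; ifs.
  case: (ltnP c.+1 c2) => H4.
    by have := Hright c2 H4 H2; ifs.
  move: H12; ifs.
- move=> r1 r2 c0 /orP [] /eqP [-> ->] H12 H1 H2; first by rewrite eqxx /= odd_double.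
  move=> _.
  case: (ltnP r2 r) => H3.
    by have := Habove r2 H3 H2; ifs.
  have H4 : r < r2 by rewrite ltn_neqAle H12 H3.
  by have := HSE r2 H4 H2; ifs.
Qed.

Lemma tab_F3 k la mu T i r c a b : skew_shape la mu -> primed_tableau k la mu T ->
  1 <= i -> i <= k - 1 -> in_shape la mu (r, c) -> T (r, c) = i.*2 ->
  (forall c2, c < c2 -> in_shape la mu (r, c2) -> i.*2.+2 <= T (r, c2)) ->
  in_shape la mu (a, b) -> r < a -> T (a, b) = i.*2.+1 ->
  (in_shape la mu (a.+1, b) -> T (a.+1, b) <> i.*2.+1 /\ T (a.+1, b) <> i.*2.+2) ->
  (0 < b -> in_shape la mu (a, b.-1) -> T (a, b.-1) <> i.*2.+1 /\ T (a, b.-1) <> i.*2.+2) ->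
  primed_tableau k la mu (fun z => if z == (r, c) then i.*2.+1
                                   else if z == (a, b) then i.*2.+2 else T z).
Proof.
move=> Hsk Ht Hi1 Hi2 Hx Tx Eright Hq Hra Tq Hsouth Hwest.
have xleft : forall c2, c2 < c -> in_shape la mu (r, c2) -> T (r, c2) <= i.*2.
  by move=> c2 H1 H2; have := rowT Ht (ltnW H1) H2 Hx; lia.
have xbelow : forall r2, r < r2 -> in_shape la mu (r2, c) -> i.*2 < T (r2, c).
  move=> r2 H1 H2; have := colT Ht (ltnW H1) Hx H2.
  have : T (r2, c) = i.*2 -> False by move=> E; have := uc_eq Ht Hx H2 (ev2 i) Tx E; lia.
  lia.
have qright : forall c2, b < c2 -> in_shape la mu (a, c2) -> i.*2.+2 <= T (a, c2).
  move=> c2 H1 H2; have := rowT Ht (ltnW H1) Hq H2.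
  have : T (a, c2) = i.*2.+1 -> False by move=> E; have := pr_eq Ht Hq H2 Tq E; lia.
  lia.
have qbelow : forall r2, a < r2 -> in_shape la mu (r2, b) -> i.*2.+2 < T (r2, b).
  move=> r2 H1 H2.
  have H3 : in_shape la mu (a.+1, b) by apply: (inS_col Hsk Hq H2); lia.
  have := colT Ht (leqnSn a) Hq H3; have := colT Ht H1 H3 H2.
  have := Hsouth H3; lia.
have qabove : forall r2, r2 < a -> in_shape la mu (r2, b) -> T (r2, b) <= i.*2.+1.
  by move=> r2 H1 H2; have := colT Ht (ltnW H1) H2 Hq; lia.
apply: (tab_update (C := fun z => (z == (r, c)) || (z == (a, b))) Ht).
- move=> z; case: ifP => [/eqP -> | _]; first by lia.
  case: ifP => [/eqP -> | _]; lia.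
- by move=> z; rewrite negb_or => /andP [/negbTE -> /negbTE ->].
- move=> z /orP [] /eqP -> _; rewrite /uletter; ifs.
- move=> t c1 c2 /orP [] /eqP [-> ->] H12 H1 H2.
    by have := Eright c2 H12 H2; ifs.
  by have := qright c2 H12 H2; ifs.
- move=> r1 r2 c0 /orP [] /eqP [-> ->] H12 H1 H2.
    by have := xbelow r2 H12 H2; ifs.
  by have := qbelow r2 H12 H2; ifs.
- move=> t c1 c2 /orP [] /eqP [-> ->] H12 H1 H2; last first.
    by move=> Ho; exfalso; move: Ho; ifs; rewrite /= odd_double.
  move=> _.
  case: (ltnP c2 c) => H3.
    by have := xleft c2 H3 H2; ifs.
  have H4 : c < c2 by lia.
  by have := Eright c2 H4 H2; ifs.
- move=> r1 r2 c0 /orP [] /eqP [-> ->] H12 H1 H2.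
    by ifs; rewrite /= odd_double.
  move=> _.
  case: (ltnP r2 a) => H3.
    by have := qabove r2 H3 H2; ifs.
  have H4 : a < r2 by rewrite ltn_neqAle H12 H3.
  by have := qbelow r2 H4 H2; ifs.
Qed.


Lemma cvalE la mu (T : pos -> nat) p : in_shape la mu p -> cval la mu T p = Some (T p).
Proof. by rewrite /cval => ->. Qed.
Lemma cvalN la mu (T : pos -> nat) p : ~~ in_shape la mu p -> cval la mu T p = None.
Proof. by rewrite /cval => /negbTE ->. Qed.

Lemma cq_F2 i la mu T r c : in_shape la mu (r, c.+1) -> T (r, c.+1) = i.*2.+1 ->
  choose_q i la mu T (r, c) = Some (r, c.+1).
Proof. by move=> H E; rewrite /choose_q /= cvalE // E pJ eqxx. Qed.

Lemma cq_F3 i la mu T r c :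
  ~~ (in_shape la mu (r, c.+1) && (T (r, c.+1) == i.*2.+1)) ->
  cge (cval la mu T (r, c.+1)) (i.*2.+2) ->
  in_shape la mu (r.+1, c) -> (T (r.+1, c) == i.*2.+1) || (T (r.+1, c) == i.*2.+2) ->
  choose_q i la mu T (r, c) = Some (ribbon_end la mu T i.+1 (r.+1, c)).
Proof.
move=> H1 H2 H3 H4; rewrite /choose_q /= uJ pJ H2 jjE H3 H4 /=.
case: (boolP (in_shape la mu (r, c.+1))) => HE.
  by rewrite cvalE // ifF //; apply/negbTE; move: H1; rewrite HE.
by rewrite cvalN.
Qed.

Lemma cq_F1 i la mu T r c :
  ~~ (in_shape la mu (r, c.+1) && (T (r, c.+1) == i.*2.+1)) ->
  cge (cval la mu T (r, c.+1)) (i.*2.+2) ->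
  ~~ (in_shape la mu (r.+1, c) && ((T (r.+1, c) == i.*2.+1) || (T (r.+1, c) == i.*2.+2))) ->
  cgt (cval la mu T (r.+1, c)) (i.*2.+2) ->
  choose_q i la mu T (r, c) = Some (r, c).
Proof.
move=> H1 H2 H3 H4; rewrite /choose_q /= uJ pJ H2 jjE (negbTE H3) H4 /=.
case: (boolP (in_shape la mu (r, c.+1))) => HE.
  by rewrite cvalE // ifF //; apply/negbTE; move: H1; rewrite HE.
by rewrite cvalN.
Qed.

Lemma bump_neq (T : pos -> nat) (x q : pos) : x != q ->
  Defs.bump (Defs.bump T x) q = fun z => if z == x then (T x).+1 else if z == q then (T q).+1 else T z.
Proof.
move=> Hne; apply: functional_extensionality => z; rewrite /Defs.bump.
have Hqx : (q == x) = false by rewrite eq_sym; exact: negbTE Hne.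
rewrite Hqx.
case: (eqVneq z x) => [-> | Hzx]; last by case: (z == q).
by rewrite (negbTE Hne).
Qed.

Lemma bump_eq (T : pos -> nat) (x : pos) :
  Defs.bump (Defs.bump T x) x = fun z => if z == x then (T x).+2 else T z.
Proof.
apply: functional_extensionality => z; rewrite /Defs.bump eqxx.
by case: (z == x).
Qed.

Unset Implicit Arguments.

Theorem lemma3p2 (k : nat) (la mu : seq nat) (T : pos -> nat) (i : nat) (x : pos) :
  skew_shape la mu ->
  primed_tableau k la mu T ->
  1 <= i -> i <= k - 1 ->
  (* f_i(T) <> 0, x being the box of the rightmost unbracketed i *)
  rightmost_free_i i la mu T = Some x ->
  exists q, choose_q i la mu T x = Some q /\
  exists T', f_op i la mu T = Some T' /\
    ((q = x /\ T x = uletter i /\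
      T' = (fun z => if z == x then uletter i.+1 else T z))
     \/
     (q <> x /\ in_shape la mu q /\ T x = uletter i /\ T q = pletter i.+1 /\
      T' = (fun z => if z == x then pletter i.+1
                     else if z == q then uletter i.+1 else T z))) /\
    primed_tableau k la mu T'.
Proof.
move=> Hsk Ht Hi1 Hi2 Hf.
have [Tx [Hxs _]] := free_props Hf.
case: x Hf Tx Hxs => r c Hf Tx Hxs.
rewrite uJ pJ uI; rewrite uI in Tx.
have HEnI : in_shape la mu (r, c.+1) -> T (r, c.+1) <> i.*2 by move=> H; rewrite -uI; exact: E_not_I Hf H.
have HEge : in_shape la mu (r, c.+1) -> i.*2 <= T (r, c.+1).
  by move=> H; have := rowT Ht (leqnSn c) Hxs H; lia.
have HSgt : in_shape la mu (r.+1, c) -> i.*2 < T (r.+1, c).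
  move=> H; have := colT Ht (leqnSn r) Hxs H.
  have : T (r.+1, c) = i.*2 -> False by move=> E; have := uc_eq Ht Hxs H (ev2 i) Tx E; lia.
  lia.
have Eright : (~~ (in_shape la mu (r, c.+1) && (T (r, c.+1) == i.*2.+1))) ->
   forall c2, c < c2 -> in_shape la mu (r, c2) -> i.*2.+2 <= T (r, c2).
  move=> HA c2 H1 H2.
  have HE : in_shape la mu (r, c.+1) by apply: (inS_row Hxs H2); lia.
  have := rowT Ht H1 HE H2; have := HEnI HE; have := HEge HE.
  move: HA; rewrite HE /=; lia.
case: (boolP (in_shape la mu (r, c.+1) && (T (r, c.+1) == i.*2.+1))) => HA.
  move/andP: HA => [HE /eqP TE].
  have Hq := cq_F2 HE TE.
  have HSE : forall r2, r < r2 -> in_shape la mu (r2, c.+1) -> i.*2.+2 < T (r2, c.+1).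
    move=> r2 H1 H2.
    have HSE : in_shape la mu (r.+1, c.+1) by apply: (inS_col Hsk HE H2); lia.
    have Hm := mu_mono Hsk (leqnSn r).
    have HS : in_shape la mu (r.+1, c).
      by move: Hxs HSE; rewrite !inS => /andP [? ?] /andP [? ?]; apply/andP; lia.
    have a1 := HSgt HS.
    have a2 := rowT Ht (leqnSn c) HS HSE.
    have a3 := colT Ht (leqnSn r) HE HSE.
    have a4 := colT Ht H1 HSE H2.
    have b1 : T (r.+1, c) = i.*2.+1 -> T (r.+1, c.+1) = i.*2.+1 -> False.
      by move=> E1 E2; have := pr_eq Ht HS HSE E1 E2; lia.
    have b2 : T (r.+1, c.+1) = i.*2.+2 -> False.
      move=> E2.
      have VS : T (r.+1, c) = i.*2.+1 \/ T (r.+1, c) = i.*2.+2 by lia.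
      have [_ [_ [_ [X0 _]]]] := ribbon_result Hsk Ht Hf HS VS.
      move: X0; rewrite (@rowpart_cons r.+1 c.+1); last by move: HSE; rewrite inS => /andP [].
      by rewrite cnt_cons E2 eqxx.
    lia.
  exists (r, c.+1); split=> //.
  exists (fun z => if z == (r, c) then i.*2.+1 else if z == (r, c.+1) then i.*2.+2 else T z).
  have Hne : (r, c) != (r, c.+1) by rewrite xpair_eqE; lia.
  split; first by rewrite /f_op Hf Hq bump_neq // Tx TE.
  split; last exact: tab_F2.
  right; split; first by case; lia.
  by do 3!split=> //.
have HEc : cge (cval la mu T (r, c.+1)) (i.*2.+2).
  case: (boolP (in_shape la mu (r, c.+1))) => HE; last by rewrite cvalN.
  rewrite cvalE //=; have := HEnI HE; have := HEge HE; move: HA; rewrite HE /=; lia.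
have Er := Eright HA.
case: (boolP (in_shape la mu (r.+1, c) && ((T (r.+1, c) == i.*2.+1) || (T (r.+1, c) == i.*2.+2)))) => HB.
  move/andP: HB => [HS VS].
  have Hq := cq_F3 HA HEc HS VS.
  have VS' : T (r.+1, c) = i.*2.+1 \/ T (r.+1, c) = i.*2.+2 by case/orP: VS => /eqP; [left | right].
  have := ribbon_result Hsk Ht Hf HS VS'.
  set q := ribbon_end la mu T i.+1 (r.+1, c) in Hq *.
  case: q Hq => a b Hq /= [Hq1 [Hra [Tq [_ [Hso Hwe]]]]].
  exists (a, b); split=> //.
  exists (fun z => if z == (r, c) then i.*2.+1 else if z == (a, b) then i.*2.+2 else T z).
  have Hne : (r, c) != (a, b) by rewrite xpair_eqE; lia.
  split; first by rewrite /f_op Hf Hq bump_neq // Tx Tq.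
  split; last exact: tab_F3.
  right; split; first by case; lia.
  by do 3!split=> //.
have HSc : cgt (cval la mu T (r.+1, c)) (i.*2.+2).
  case: (boolP (in_shape la mu (r.+1, c))) => HS; last by rewrite cvalN.
  rewrite cvalE //=; have := HSgt HS; move: HB; rewrite HS /=; lia.
have Hq := cq_F1 HA HEc HB HSc.
exists (r, c); split=> //.
exists (fun z => if z == (r, c) then i.*2.+2 else T z).
split; first by rewrite /f_op Hf Hq bump_eq Tx.
split; first by left.
apply: tab_F1 => //.
move=> r2 H1 H2.
have HS : in_shape la mu (r.+1, c) by apply: (inS_col Hsk Hxs H2); lia.
have := colT Ht H1 HS H2.
move: HSc; rewrite cvalE //=; lia.
Qed.
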